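(* Let $n\ge 3$ and let $\mathcal{H}$ be the associating hypergraph on $M(D_n,2)$. Then the covering number is $\rho(\mathcal{H})=n+\lceil n/3\rceil$.
   Context: $D_n=\langle x,y\mid x^n=y^2=1,\ xy=yx^{-1}\rangle$. $M(D_n,2)=\{(g,\alpha): g\in D_n,\ \alpha\in\mathbb{Z}_2\}$ with $(g_1,\alpha_1)\circ(g_2,\alpha_2)=(g_1^{1-\alpha_2} g_2^{(-1)^{\alpha_1}} g_1^{\alpha_2},\ \alpha_1+\alpha_2)$. The associating hypergraph $\mathcal{H}$ has vertex set $M(D_n,2)$ ($4n$ vertices), and a 3-element set $\{a,b,c\}$ of distinct elements is a hyperedge when $(a\circ b)\circ c=a\circ(b\circ c)$. The covering number $\rho(\mathcal{H})$ is the minimum number of hyperedges whose union is the whole vertex set. *)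

(* Defs.v *)
From mathcomp Require Import all_boot all_order all_algebra.
Set Implicit Arguments. Unset Strict Implicit. Unset Printing Implicit Defensive.
Import GRing.Theory.
Local Open Scope ring_scope.

(* Concrete model of D_n = < x, y | x^n = y^2 = 1, xy = yx^{-1} > (n >= 2):
   the pair (k, s) : 'Z_n * bool stands for x^k y^s. *)
Definition dih (n : nat) : finType := ('Z_n * bool)%type.

Definition dmul (n : nat) (g h : dih n) : dih n :=
  let: (a, s) := g in let: (b, t) := h in
  ((a + (if s then - b else b))%R, addb s t).

Definition dinv (n : nat) (g : dih n) : dih n :=
  let: (a, s) := g in if s then (a, s) else ((- a)%R, s).

Definition dunit (n : nat) : dih n := (0%R, false).

Definition dpow_sign (n : nat) (g : dih n) (alpha : bool) : dih n :=
  if alpha then dinv g else g.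

Definition dpow01 (n : nat) (g : dih n) (e : bool) : dih n :=
  if e then g else dunit n.

(* M(D_n,2) with elements (g, alpha), alpha in Z_2 (encoded as bool). *)
Definition MD (n : nat) : finType := (dih n * bool)%type.

(* (g1,a1) o (g2,a2) = (g1^{1-a2} g2^{(-1)^a1} g1^{a2}, a1 + a2) *)
Definition mop (n : nat) (u v : MD n) : MD n :=
  let: (g1, a1) := u in let: (g2, a2) := v in
  (dmul (dmul (dpow01 g1 (~~ a2)) (dpow_sign g2 a1)) (dpow01 g1 a2),
   addb a1 a2).

Definition assoc_edge (n : nat) (E : {set MD n}) : Prop :=
  exists a b c : MD n,
    [/\ a != b, b != c, a != c, E = [set a; b; c]
      & mop (mop a b) c = mop a (mop b c)].

Definition assoc_edge_cover (n : nat) (F : {set {set MD n}}) : Prop :=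
  (forall E, E \in F -> @assoc_edge n E) /\ cover F = [set: MD n].

Definition covering_number_is (n : nat) (m : nat) : Prop :=
  (exists F : {set {set MD n}}, assoc_edge_cover F /\ #|F| = m) /\
  (forall F : {set {set MD n}}, assoc_edge_cover F -> (m <= #|F|)%N).

(* Main.v *)
Require Import Defs.
From mathcomp Require Import all_boot all_order all_algebra.
From mathcomp Require Import zify ring.
Set Implicit Arguments. Unset Strict Implicit. Unset Printing Implicit Defensive.
Import GRing.Theory.

Lemma edge_perm (n : nat) (u v w x y z : MD n) :
  [set x; y; z] = [set u; v; w] -> x != y -> y != z -> x != z ->
  mop (mop x y) z = mop x (mop y z) -> assoc_edge [set u; v; w].
Proof. by move=> <- *; exists x, y, z. Qed.

Definition isA (n : nat) (x : MD n) := ~~ x.1.2 && ~~ x.2.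
Definition cls (n : nat) (x : MD n) := (x.1.2, x.2).
Definition good (n : nat) (u v w : MD n) :=
  [&& (isA u || isA v || (cls u == cls v)),
      (isA u || isA w || (cls u == cls w)) &
      (isA v || isA w || (cls v == cls w))].

Ltac setperm := apply/setP => ?; rewrite !inE;
  by do 3 case: (_ == _).

Ltac solve_assoc := rewrite /mop /dmul /dinv /dpow01 /dpow_sign /dunit /=;
  congr (_, _, _); ring.

Ltac try_ord u v w :=
  first [ apply: (@edge_perm _ u v w u v w); [setperm | by [] | by [] | by [] | solve_assoc]
        | apply: (@edge_perm _ u v w u w v); [setperm | by [] | by rewrite eq_sym | by [] | solve_assoc]
        | apply: (@edge_perm _ u v w v u w); [setperm | by rewrite eq_sym | by [] | by [] | solve_assoc]
        | apply: (@edge_perm _ u v w v w u); [setperm | by [] | by rewrite eq_sym | by rewrite eq_sym | solve_assoc]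
        | apply: (@edge_perm _ u v w w u v); [setperm | by rewrite eq_sym | by [] | by rewrite eq_sym | solve_assoc]
        | apply: (@edge_perm _ u v w w v u); [setperm | by rewrite eq_sym | by rewrite eq_sym | by rewrite eq_sym | solve_assoc] ].

Lemma good_edge (n : nat) (u v w : MD n) :
  u != v -> v != w -> u != w -> good u v w -> assoc_edge [set u; v; w].
Proof.
case: u => [[a s1] b1]; case: v => [[b s2] b2]; case: w => [[c s3] b3].
set u := (a, s1, b1); set v := (b, s2, b2); set w := (c, s3, b3).
move=> Huv Hvw Huw.
case: s1 b1 s2 b2 s3 b3 @u @v @w Huv Hvw Huw => [] [] [] [] [] [] u v w Huv Hvw Huw;
  rewrite /good /isA /cls /= // => _; try_ord u v w.
Qed.

Definition fpos (n : nat) (p : nat) : MD n :=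
  if (p < n)%N then ((inZp p : 'Z_n), false, true)
  else if (p < n.*2 - 2)%N then ((inZp (p - n) : 'Z_n), false, false)
  else if (p < 3 * n - 2)%N then ((inZp (p - (n.*2 - 2)) : 'Z_n), true, false)
  else if (p < 3 * n)%N then ((inZp (p - n.*2) : 'Z_n), false, false)
  else ((inZp (p - 3 * n) : 'Z_n), true, true).

Definition gpos (n : nat) (v : MD n) : nat :=
  let: (k, s, al) := v in
  match s, al with
  | false, true => nat_of_ord k
  | false, false => if (nat_of_ord k < n - 2)%N then (k + n)%N else (k + n.*2)%N
  | true, false => (k + n.*2 - 2)%N
  | true, true => (k + 3 * n)%N
  end.

Lemma valZn (n : nat) (hn : (2 <= n)%N) (k : nat) : (k < n)%N ->
  nat_of_ord (inZp k : 'Z_n) = k.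
Proof. by move=> hk /=; rewrite Zp_cast // modn_small. Qed.

Lemma ltZn (n : nat) (hn : (2 <= n)%N) (k : 'Z_n) : (nat_of_ord k < n)%N.
Proof. by rewrite -[X in (_ < X)%N](Zp_cast hn) ltn_ord. Qed.

Lemma gfK (n : nat) (hn : (3 <= n)%N) (p : nat) : (p < 4 * n)%N -> gpos (fpos n p) = p.
Proof.
have h2 : (2 <= n)%N by lia.
move=> hp; rewrite /fpos.
case: ltnP => h1 /=; first by rewrite Zp_cast // modn_small.
case: ltnP => h3 /=.
  by rewrite Zp_cast // modn_small; [case: ltnP => //; lia | lia].
case: ltnP => h4 /=; first by rewrite Zp_cast // modn_small; lia.
case: ltnP => h5 /=; first by rewrite Zp_cast // modn_small; [case: ltnP => //; lia | lia].
by rewrite Zp_cast // modn_small; lia.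
Qed.

Lemma fgK (n : nat) (hn : (3 <= n)%N) (v : MD n) : fpos n (gpos v) = v.
Proof.
have h2 : (2 <= n)%N by lia.
case: v => [[k s] al]; have hk := ltZn h2 k.
case: s; case: al => /=.
- rewrite /fpos; do 4 (case: ltnP => ?; try lia).
  by congr (_, _, _); rewrite -[X in _ = X]valZpK; congr inZp; lia.
- rewrite /fpos; do 3 (case: ltnP => ?; try lia).
  by congr (_, _, _); rewrite -[X in _ = X]valZpK; congr inZp; lia.
- rewrite /fpos; case: ltnP => ?; last lia.
  by rewrite valZpK.
- case: (ltnP k (n - 2)) => hh; rewrite /fpos.
  + case: ltnP => ?; first lia. case: ltnP => ?; last lia.
    by congr (_, _, _); rewrite -[X in _ = X]valZpK; congr inZp; lia.
  + do 4 (case: ltnP => ?; try lia).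
    by congr (_, _, _); rewrite -[X in _ = X]valZpK; congr inZp; lia.
Qed.

Lemma g_lt (n : nat) (hn : (3 <= n)%N) (v : MD n) : (gpos v < 4 * n)%N.
Proof.
have h2 : (2 <= n)%N by lia.
case: v => [[k s] al]; have hk := ltZn h2 k.
case: s; case: al => /=; try lia.
by case: ifP => _; lia.
Qed.

Definition tpos (n j : nat) := minn (3 * j) (4 * n - 3).

Definition Epos (n j : nat) : {set MD n} :=
  [set fpos n (tpos n j); fpos n (tpos n j).+1; fpos n (tpos n j).+2].

Lemma good_pos (n : nat) (hn : (3 <= n)%N) (j : nat) :
  good (fpos n (tpos n j)) (fpos n (tpos n j).+1) (fpos n (tpos n j).+2).
Proof.
have ht : tpos n j = minn (3 * j) (4 * n - 3) by [].
move: (tpos n j) ht => t ht.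
rewrite /fpos.
repeat (case: ltnP => ?; try (exfalso; lia)).
all: done.
Qed.

Lemma card3 (T : finType) (a b c : T) : (#|[set a; b; c]| <= 3)%N.
Proof.
rewrite (leq_trans (leq_card_setU _ _)) // cards1 -[3]/(2+1) leq_add2r.
by rewrite (leq_trans (leq_card_setU _ _)) // !cards1.
Qed.

Lemma cardMD (n : nat) (hn : (3 <= n)%N) : #|[set: MD n]| = (4 * n)%N.
Proof.
rewrite cardsT /MD card_prod /dih card_prod !card_bool card_ord Zp_cast; lia.
Qed.

Lemma lower (n : nat) (hn : (3 <= n)%N) (F : {set {set MD n}}) :
  assoc_edge_cover F -> (4 * n <= 3 * #|F|)%N.
Proof.
case=> hE hc; rewrite -(cardMD hn) -hc.
have [h _] := leq_card_cover F.
apply: (leq_trans h); rewrite mulnC -sum_nat_const.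
apply: leq_sum => E /hE [a [b [c [_ _ _ -> _]]]]; exact: card3.
Qed.

Lemma edge_pos (n : nat) (hn : (3 <= n)%N) (j : nat) : assoc_edge (Epos n j).
Proof.
have inj : forall p q, (p < 4 * n)%N -> (q < 4 * n)%N -> p != q -> fpos n p != fpos n q.
  move=> p q hp hq; apply: contra => /eqP e; apply/eqP.
  by rewrite -(gfK hn hp) -(gfK hn hq) e.
have ht : (tpos n j <= 4 * n - 3)%N by rewrite /tpos geq_minr.
apply: good_edge; try apply: inj; try lia.
exact: good_pos.
Qed.

Theorem mainTheorem7 (n : nat) (hn : (3 <= n)%N) :
  covering_number_is n (n + (n + 2) %/ 3)%N.
Proof.
set m := (n + (n + 2) %/ 3)%N.
have cov : assoc_edge_cover [set Epos n (nat_of_ord j) | j : 'I_m].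
  split.
    by move=> E /imsetP [j _ ->]; exact: edge_pos.
  apply/setP => v; rewrite inE /cover; apply/bigcupP.
  have hp := g_lt hn v.
  set p := gpos v in hp.
  have hj : (minn (p %/ 3) (m - 1) < m)%N by rewrite /m; lia.
  exists (Epos n (Ordinal hj)); first by apply/imsetP; exists (Ordinal hj).
  rewrite -(fgK hn v) -/p /Epos /=.
  have : p = tpos n (minn (p %/ 3) (m - 1)) \/ p = (tpos n (minn (p %/ 3) (m - 1))).+1
     \/ p = (tpos n (minn (p %/ 3) (m - 1))).+2 by rewrite /tpos /m; lia.
  by case=> [<-|[<-|<-]]; rewrite !inE eqxx ?orbT.
split.
  exists [set Epos n (nat_of_ord j) | j : 'I_m]; split => //.
  have h1 : (#|[set Epos n (nat_of_ord j) | j : 'I_m]| <= m)%N.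
    by rewrite (leq_trans (leq_imset_card _ _)) // card_ord.
  have h2 := lower hn cov; move: h1 h2.
  move: #|[set Epos n (nat_of_ord j) | j : 'I_m]| => c; rewrite /m; lia.
move=> F hF; have := lower hn hF; rewrite /m; lia.
Qed.
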